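(* Let $n\ge 1$ and $\bar\gamma=(\gamma_1,\dots,\gamma_n)\in\mathbb{N}^n$. Let $s_1,\dots,s_n$ be i.i.d. random variables with $\Pr[s_i=k]=2^{-(k+1)}$ for $k=0,1,2,\dots$, and let $A(\bar\gamma)$ be the event that the closed intervals $[s_i,s_i+\gamma_i]$, $i=1,\dots,n$, are pairwise disjoint. Then $$\Pr[A(\bar\gamma)]=\frac{2^{-\left(\binom{n+1}{2}-1\right)}}{\prod_{i=1}^{n-1}\left(1-2^{-(n+1-i)}\right)}\sum_{\sigma\in \mathrm{Sym}_n}\prod_{i=1}^{n-1}2^{-(n-i)\gamma_{\sigma(i)}},$$ where $\mathrm{Sym}_n$ is the set of all permutations of $\{1,\dots,n\}$.
   Context: $\mathbb{N}=\{0,1,2,\dots\}$. *)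

(* Defs.v *)
From HB Require Import structures.
From mathcomp Require Import all_boot all_order all_algebra all_fingroup.
Set Implicit Arguments. Unset Strict Implicit. Unset Printing Implicit Defensive.
Import Order.TTheory GRing.Theory Num.Theory.
Local Open Scope ring_scope.

(* The event A(gamma): the closed intervals [s_i, s_i + gamma_i] are pairwise
   disjoint (for integer endpoints, [a,a+g] and [b,b+h] are disjoint iff
   a + g < b or b + h < a). *)
Definition intervals_disjoint (n : nat) (gamma s : 'I_n -> nat) : bool :=
  [forall i : 'I_n, forall j : 'I_n,
     (i != j) ==> ((s i + gamma i < s j)%N || (s j + gamma j < s i)%N)].

Definition point_prob (n : nat) (s : 'I_n -> nat) : rat :=
  \prod_(i < n) (2%:R^-1) ^+ (s i).+1.

Definition trunc_prob (n : nat) (gamma : 'I_n -> nat) (N : nat) : rat :=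
  \sum_(s : {ffun 'I_n -> 'I_N} | intervals_disjoint gamma (fun i => nat_of_ord (s i)))
     point_prob (fun i => nat_of_ord (s i)).

(* Pr[A(gamma)] = l: the (nonnegative, monotone) truncated sums converge to l.
   Since the series has nonnegative terms, this is exactly the probability. *)
Definition prob_A_eq (n : nat) (gamma : 'I_n -> nat) (l : rat) : Prop :=
  forall eps : rat, 0 < eps ->
    exists N0 : nat, forall N : nat, (N0 <= N)%N -> `|trunc_prob gamma N - l| < eps.

(* Right-hand side of the formula (indices shifted to 0-based). *)
Definition rhs_formula (n : nat) (gamma : 'I_n -> nat) : rat :=
  (2%:R^-1) ^+ ('C(n.+1, 2)).-1
  / (\prod_(1 <= i < n) (1 - (2%:R^-1) ^+ (n.+1 - i)))
  * \sum_(sigma : 'S_n) \prod_(i < n) (2%:R^-1) ^+ ((n.-1 - i) * gamma (sigma i)).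

(* Main.v *)
Require Import Defs.
From HB Require Import structures.
From mathcomp Require Import all_boot all_order all_algebra all_fingroup.
Set Implicit Arguments. Unset Strict Implicit. Unset Printing Implicit Defensive.
Import Order.TTheory GRing.Theory Num.Theory.
Local Open Scope ring_scope.

Notation h := ((2%:R : rat)^-1).

Definition Psum n (g : 'I_n -> nat) : rat :=
  \sum_(sigma : 'S_n) \prod_(i < n) h ^+ ((n.-1 - i) * g (sigma i)).

Lemma Psum_rec n (g : 'I_n.+1 -> nat) :
  Psum g = \sum_(i < n.+1) h ^+ (n * g i) * Psum (fun k => g (lift i k)).
Proof.
rewrite /Psum (partition_big (fun s : 'S_n.+1 => s ord0) predT) //=.
apply: eq_bigr => i0 _.
rewrite (reindex (lift_perm ord0 i0)); last first.
  pose ulsf i (s : 'S_n.+1) k := odflt k (unlift (s i) (s (lift i k))).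
  have ulsfK i (s : 'S_n.+1) k: lift (s i) (ulsf i s k) = s (lift i k).
    rewrite /ulsf; have:= neq_lift i k.
    by rewrite -(can_eq (permK s)) => /unlift_some[] ? ? ->.
  have inj_ulsf: injective (ulsf ord0 _).
    move=> s; apply: can_inj (ulsf (s ord0) s^-1%g) _ => k'.
    by rewrite {1}/ulsf ulsfK !permK liftK.
  exists (fun s => perm (inj_ulsf s)) => [s _ | s].
    by apply/permP=> k'; rewrite permE /ulsf lift_perm_lift lift_perm_id liftK.
  move/(s _ =P _) => si0; apply/permP=> k.
  case: (unliftP ord0 k) => [k'|] ->; rewrite ?lift_perm_id //.
  by rewrite lift_perm_lift -si0 permE ulsfK.
rewrite big_distrr /=.
apply: eq_big => [s | s _]; first by rewrite lift_perm_id eqxx.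
rewrite big_ord_recl lift_perm_id subn0; congr (_ * _).
apply: eq_bigr => k _; rewrite lift_perm_lift.
congr (_ ^+ (_ * _)).
rewrite /= /bump /= subnDA subn1 //.
Qed.

Lemma h_ge0 : 0 <= h. Proof. by []. Qed.
Lemma h_lt1 : h < 1. Proof. by []. Qed.
Lemma hX_lt1 k : h ^+ k.+1 < 1. Proof. by rewrite exprn_ilt1. Qed.
Lemma hX_ge0 k : 0 <= h ^+ k. Proof. exact: exprn_ge0. Qed.
Lemma one_sub_hX k : 1 - h ^+ k.+1 != 0.
Proof. by rewrite subr_eq0 eq_sym (lt_eqF (hX_lt1 k)). Qed.

Definition cst m := h ^+ ('C(m.+1, 2)).-1 / (\prod_(1 <= i < m) (1 - h ^+ (m.+1 - i))).

Lemma rhsE n (g : 'I_n -> nat) : rhs_formula g = cst n * Psum g.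
Proof. by []. Qed.

Lemma cst_rec n : cst n.+1 * (1 - h ^+ n.+1) = h ^+ n.+1 * cst n.
Proof.
case: n => [|n].
  by rewrite /cst !big_geq // !divr1 /= mulr1 expr0 expr1 mulr1.
rewrite /cst big_nat_recl // (_ : (n.+3 - 1 = n.+2)%N) //.
have -> : \prod_(1 <= i < n.+1) (1 - h ^+ (n.+3 - i.+1)) =
          \prod_(1 <= i < n.+1) (1 - h ^+ (n.+2 - i)) by apply: eq_bigr => i _; rewrite subSS.
set P := \prod_(1 <= i < n.+1) _.
have -> : ('C(n.+3, 2)).-1 = (('C(n.+2, 2)).-1 + n.+2)%N.
  have : (0 < 'C(n.+2, 2))%N by rewrite bin_gt0.
  rewrite [in LHS]binS bin1; case: ('C(n.+2,2)) => //= c _.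
rewrite exprD invfM.
set a := _ ^+ 'C(_, _).-1; set q := h ^+ n.+2; set u := 1 - q.
rewrite [u^-1 / P]mulrC [a * q * _]mulrA divfK ?one_sub_hX //.
by rewrite mulrAC mulrC.
Qed.

Lemma rhs_rec n (g : 'I_n.+1 -> nat) :
  rhs_formula g = h ^+ n.+1 * rhs_formula g +
     \sum_(i < n.+1) (h * (h ^+ (g i).+1) ^+ n) * rhs_formula (fun k => g (lift i k)).
Proof.
set S := \sum_(i < n.+1) _.
suff key : rhs_formula g * (1 - h ^+ n.+1) = S.
  by rewrite -key mulrBr mulr1 [rhs_formula g * _]mulrC addrC subrK.
rewrite /S [rhs_formula g]rhsE -mulrA [Psum g * _]mulrC mulrA cst_rec Psum_rec.
rewrite mulr_sumr; apply: eq_bigr => i _; rewrite rhsE.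
move: (cst n) (Psum _) => c P; rewrite !mulrA; congr (_ * _).
rewrite mulrAC -exprD -exprM -exprS mulrC.
by rewrite [RHS]mulrC mulSn addSn mulnC.
Qed.

Lemma big_bij (T1 T2 : eqType) (r1 : seq T1) (r2 : seq T2) (P1 : pred T1) (P2 : pred T2)
  (f : T1 -> T2) (g : T2 -> T1) (F1 : T1 -> rat) (F2 : T2 -> rat) :
  uniq r1 -> uniq r2 ->
  (forall x, x \in r1 -> P1 x -> [/\ f x \in r2, P2 (f x), g (f x) = x & F1 x = F2 (f x)]) ->
  (forall y, y \in r2 -> P2 y -> [/\ g y \in r1, P1 (g y) & f (g y) = y]) ->
  \sum_(x <- r1 | P1 x) F1 x = \sum_(y <- r2 | P2 y) F2 y.
Proof.
move=> u1 u2 Hf Hg; rewrite -[LHS]big_filter -[RHS]big_filter.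
transitivity (\sum_(x <- filter P1 r1) F2 (f x)).
  by apply: eq_big_seq => x; rewrite mem_filter => /andP[p1 r]; case: (Hf x r p1).
transitivity (\sum_(y <- map f (filter P1 r1)) F2 y); first by rewrite big_map.
apply: perm_big; apply: uniq_perm.
- rewrite map_inj_in_uniq ?filter_uniq // => x y.
  rewrite !mem_filter => /andP[px rx] /andP[py ry] e.
  case: (Hf x rx px) => _ _ <- _; case: (Hf y ry py) => _ _ <- _; by rewrite e.
- by rewrite filter_uniq.
move=> y; apply/mapP/idP => [[x] | ].
  by rewrite !mem_filter => /andP[px rx] ->; case: (Hf x rx px) => -> -> _ _.
rewrite mem_filter => /andP[py ry]; case: (Hg y ry py) => r p e.
by exists (g y) => //; rewrite mem_filter p r.
Qed.

Definition ulist m N : seq {ffun 'I_m -> nat} :=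
  map (fun s : {ffun 'I_m -> 'I_N} => [ffun i => nat_of_ord (s i)]) (enum {ffun 'I_m -> 'I_N}).

Lemma ulist_uniq m N : uniq (ulist m N).
Proof.
rewrite map_inj_uniq ?enum_uniq // => s t e; apply/ffunP => i; apply: val_inj.
by have := congr1 (fun u : {ffun 'I_m -> nat} => u i) e; rewrite /= !ffunE.
Qed.

Lemma mem_ulist m N u : (u \in ulist m N) = [forall i, u i < N]%N.
Proof.
apply/mapP/forallP => [[s _ ->] i | H]; first by rewrite ffunE.
exists [ffun i => Ordinal (H i)]; first by rewrite mem_enum.
by apply/ffunP => i; rewrite !ffunE.
Qed.

Lemma trunc_probE m (g : 'I_m -> nat) N :
  trunc_prob g N = \sum_(u <- ulist m N | intervals_disjoint g u) point_prob u.
Proof.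
rewrite /trunc_prob big_map big_enum_cond /=; apply: eq_big => s.
  by apply: eq_forallb => i; apply: eq_forallb => j; rewrite !ffunE.
by move=> _; rewrite /point_prob; apply: eq_bigr => i _; rewrite ffunE.
Qed.

Lemma disjP m (g : 'I_m -> nat) (s : 'I_m -> nat) :
  reflect (forall i j, i != j -> (s i + g i < s j)%N || (s j + g j < s i)%N)
          (intervals_disjoint g s).
Proof.
apply: (iffP forallP) => [H i j ij | H i].
  by move/forallP: (H i) => /(_ j) /implyP; apply.
by apply/forallP => j; apply/implyP; exact: H.
Qed.

Lemma T_split m (g : 'I_m -> nat) (r : seq {ffun 'I_m -> nat}) :
  \sum_(u <- r | intervals_disjoint g u) point_prob u =
  \sum_(u <- r | intervals_disjoint g u && [forall i, 0 < u i]%N) point_prob u +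
  \sum_(i < m) \sum_(u <- r | intervals_disjoint g u && (u i == 0%N)) point_prob u.
Proof.
rewrite [X in _ + X](eq_bigr (fun i => \sum_(u <- r)
   (if intervals_disjoint g u && (u i == 0%N) then point_prob u else 0))); last first.
  by move=> i _; rewrite big_mkcond.
rewrite exchange_big /= [LHS]big_mkcond [X in X + _]big_mkcond -big_split /=.
apply: eq_bigr => u _.
case: (boolP (intervals_disjoint g u)) => D /=; last by rewrite add0r big1.
case: (boolP [forall i, 0 < u i]%N) => A.
  rewrite big1 ?addr0 // => i _.
  by move/forallP: A => /(_ i); rewrite lt0n => /negbTE ->.
move/forallPn: A => [i0]; rewrite lt0n negbK => ui0.
rewrite add0r (bigD1 i0) //= ui0 big1 ?addr0 // => j ji0.
have: (u j != 0%N).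
  move/disjP: D => /(_ i0 j); rewrite eq_sym ji0 (eqP ui0) ltn0 /= => /(_ isT).
  by rewrite orbF add0n -lt0n => /(leq_ltn_trans (leq0n _)).
by move/negbTE ->.
Qed.

Lemma T_shift m (g : 'I_m -> nat) N :
  \sum_(u <- ulist m N.+1 | intervals_disjoint g u && [forall i, 0 < u i]%N) point_prob u
  = h ^+ m * \sum_(v <- ulist m N | intervals_disjoint g v) point_prob v.
Proof.
rewrite big_distrr /=.
apply: (@big_bij _ _ _ _ _ _ (fun u : {ffun 'I_m -> nat} => [ffun i => (u i).-1])
   (fun v : {ffun 'I_m -> nat} => [ffun i => (v i).+1])); try exact: ulist_uniq.
- move=> u; rewrite mem_ulist => /forallP B /andP[D /forallP A]; split.
  + rewrite mem_ulist; apply/forallP => i; rewrite ffunE.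
    by have := B i; have := A i; case: (u i).
  + apply/disjP => i j ij; rewrite !ffunE; move/disjP: D => /(_ i j ij).
    by have := A i; have := A j; case: (u i) => // a; case: (u j) => // b; rewrite !addSn !ltnS.
  + by apply/ffunP => i; rewrite !ffunE; have := A i; case: (u i).
  + have -> : h ^+ m = \prod_(i < m) h by rewrite prodr_const card_ord.
    rewrite /point_prob -big_split; apply: eq_bigr => i _; rewrite ffunE /= -exprS.
    by have := A i; case: (u i).
- move=> v; rewrite mem_ulist => /forallP B D; split.
  + by rewrite mem_ulist; apply/forallP => i; rewrite ffunE ltnS.
  + apply/andP; split; last by apply/forallP => i; rewrite ffunE.
    by apply/disjP => i j ij; rewrite !ffunE !addSn !ltnS; move/disjP: D; apply.
  + by apply/ffunP => i; rewrite !ffunE.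
Qed.

Lemma sub_ltE a b c x : (c <= a)%N -> (c <= b)%N -> (a - c + x < b - c)%N = (a + x < b)%N.
Proof.
move=> ca cb; rewrite addnBAC // ltn_sub2rE //; exact: leq_trans ca (leq_addr _ _).
Qed.

Lemma T_zero m (g : 'I_m.+1 -> nat) N i :
  \sum_(u <- ulist m.+1 N.+1 | intervals_disjoint g u && (u i == 0%N)) point_prob u =
  (h * (h ^+ (g i).+1) ^+ m) *
  \sum_(v <- ulist m (N - g i) | intervals_disjoint (fun k => g (lift i k)) v) point_prob v.
Proof.
rewrite big_distrr /=.
apply: (@big_bij _ _ _ _
   (fun u : {ffun 'I_m.+1 -> nat} => intervals_disjoint g u && (u i == 0%N))
   (fun v : {ffun 'I_m -> nat} => intervals_disjoint (fun k => g (lift i k)) v)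
   (fun u : {ffun 'I_m.+1 -> nat} => [ffun j : 'I_m => (u (lift i j) - (g i).+1)%N])
   (fun v : {ffun 'I_m -> nat} =>
      [ffun k => if unlift i k is Some j then (v j + (g i).+1)%N else 0%N])
   (fun u : {ffun 'I_m.+1 -> nat} => point_prob u)
   (fun v : {ffun 'I_m -> nat} => h * (h ^+ (g i).+1) ^+ m * point_prob v));
  try exact: ulist_uniq.
- move=> u; rewrite mem_ulist => /forallP B /andP[D /eqP ui].
  have bg j : ((g i).+1 <= u (lift i j))%N.
    move/disjP: D => /(_ i (lift i j) (neq_lift _ _)); rewrite ui ltn0 orbF add0n.
    by [].
  split.
  + rewrite mem_ulist; apply/forallP => j; rewrite ffunE -(subSS (g i) N).
    by apply: ltn_sub2r => //; apply: leq_ltn_trans (bg j) (B _).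
  + apply/disjP => j j' jj; rewrite !ffunE !sub_ltE //.
    by move/disjP: D; apply; rewrite (inj_eq (lift_inj (h:=i))).
  + apply/ffunP => k; rewrite ffunE; case: (unliftP i k) => [j|] ->.
      by rewrite ffunE subnK.
    by rewrite ui.
  + rewrite /point_prob (bigD1_ord i) //= ui expr1 -mulrA; congr (_ * _).
    have -> : (h ^+ (g i).+1) ^+ m = \prod_(j < m) h ^+ (g i).+1
      by rewrite prodr_const card_ord.
    rewrite -big_split; apply: eq_bigr => j _; rewrite ffunE /= -exprD addnS subnKC //.
- move=> v; rewrite mem_ulist => /forallP B D; split.
  + rewrite mem_ulist; apply/forallP => k; rewrite ffunE.
    case: (unliftP i k) => [j|] _ //=.
    by have := B j; rewrite ltn_subRL addnS ltnS addnC.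
  + apply/andP; split; last by rewrite ffunE unlift_none.
    apply/disjP => k k'; rewrite !ffunE.
    case: (unliftP i k) => [j|] ->; case: (unliftP i k') => [j'|] -> //=.
    * rewrite (inj_eq (lift_inj (h:=i))) => jj.
      by rewrite (addnAC (v j)) (addnAC (v j')) !ltn_add2r; move/disjP: D; apply.
    * by move=> _; rewrite add0n addnS ltnS leq_addl.
    * by move=> _; rewrite add0n addnS ltnS leq_addl.
    * by rewrite eqxx.
  + by apply/ffunP => j; rewrite !ffunE liftK addnK.
Qed.

Lemma T_rec m (g : 'I_m.+1 -> nat) N :
  trunc_prob g N.+1 = h ^+ m.+1 * trunc_prob g N +
    \sum_(i < m.+1) (h * (h ^+ (g i).+1) ^+ m) * trunc_prob (fun k => g (lift i k)) (N - g i).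
Proof.
rewrite !trunc_probE T_split T_shift; congr (_ + _); apply: eq_bigr => i _.
by rewrite T_zero trunc_probE.
Qed.

Definition conv (T : nat -> rat) (L : rat) := forall eps : rat, 0 < eps ->
  exists N0 : nat, forall N : nat, (N0 <= N)%N -> `|T N - L| < eps.

Lemma conv_add a b : conv a 0 -> conv b 0 -> conv (fun N => a N + b N) 0.
Proof.
move=> ca cb eps e0.
have e2 : 0 < eps / 2 by rewrite divr_gt0.
case: (ca _ e2) => Na Ha; case: (cb _ e2) => Nb Hb.
exists (maxn Na Nb) => N; rewrite geq_max => /andP[la lb].
rewrite subr0 (splitr eps); apply: le_lt_trans (ler_normD _ _) _.
by apply: ltrD; [have := Ha N la | have := Hb N lb]; rewrite subr0.
Qed.

Lemma conv_scale a c : `|c| <= 1 -> conv a 0 -> conv (fun N => c * a N) 0.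
Proof.
move=> c1 ca eps e0; case: (ca _ e0) => N0 H; exists N0 => N /H.
rewrite !subr0 normrM => lt; apply: le_lt_trans lt.
by apply: ler_piMl.
Qed.

Lemma conv_shift a L k : conv a L -> conv (fun N => a (N - k)%N) L.
Proof.
move=> ca eps e0; case: (ca _ e0) => N0 H; exists (N0 + k)%N => N le; apply: H.
by rewrite -(leq_add2r k) subnK // (leq_trans (leq_addl _ _) le).
Qed.

Lemma conv_sub a L : conv a L -> conv (fun N => a N - L) 0.
Proof. by move=> ca eps e0; case: (ca _ e0) => N0 H; exists N0 => N /H; rewrite subr0. Qed.

Lemma conv_sum k (x : 'I_k -> nat -> rat) :
  (forall i, conv (x i) 0) -> conv (fun N => \sum_(i < k) x i N) 0.
Proof.
elim: k x => [|k IH] x H.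
  by move=> eps e0; exists 0%N => N _; rewrite big_ord0 subr0 normr0.
have := conv_add (IH (fun i => x (widen_ord (leqnSn k) i)) (fun i => H _)) (H ord_max).
move=> c eps e0; case: (c _ e0) => N0 HN; exists N0 => N /HN.
by rewrite big_ord_recr.
Qed.

Lemma pow_small E e : 0 <= E -> 0 < e -> exists K : nat, h ^+ K * E < e.
Proof.
move=> E0 e0; have x0 : 0 <= E / e by rewrite divr_ge0 // ltW.
have := archi_boundP x0; set K := Num.Def.archi_bound _ => lt.
exists K; rewrite exprVn mulrC.
have p0 : 0 < (2%:R : rat) ^+ K by rewrite exprn_gt0.
rewrite ltr_pdivrMr //; move: lt; rewrite ltr_pdivrMr // => lt.
apply: lt_le_trans lt _; rewrite mulrC; apply: ler_wpM2l; first exact: ltW.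
by rewrite -natrX ler_nat ltnW // ltn_expl.
Qed.

Lemma conv_rec T L q d : 0 <= q -> q <= h ->
  (forall N, T N.+1 - L = q * (T N - L) + d N) -> conv d 0 -> conv T L.
Proof.
move=> q0 qh rec cd eps e0.
have e4 : 0 < eps / 4%:R by rewrite divr_gt0.
case: (cd _ e4) => N1 H1.
set E := `|T N1 - L|.
have bnd k : `|T (N1 + k)%N - L| <= h ^+ k * E + 2%:R * (eps / 4%:R).
  elim: k => [|k IH]; first by rewrite addn0 expr0 mul1r lerDl mulr_ge0 // ltW.
  rewrite addnS rec; apply: le_trans (ler_normD _ _) _.
  have dk : `|d (N1 + k)%N| <= eps / 4%:R.
    by have := H1 (N1 + k)%N (leq_addr _ _); rewrite subr0 => /ltW.
  rewrite normrM (ger0_norm q0) exprS.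
  set x := `|T _ - L|; set c := eps / 4%:R.
  have x0 : 0 <= x by exact: normr_ge0.
  have : q * x <= h * (h ^+ k * E + 2%:R * c).
    apply: ler_pM => //; exact: le_trans q0 qh.
  move=> qx; apply: le_trans (lerD qx dk) _.
  rewrite mulrDr mulrA -addrA lerD2l mulrA mulVf // mul1r.
  by rewrite mulr_natl mulr2n.
have E0 : 0 <= E by exact: normr_ge0.
have e2 : 0 < eps / 2%:R by rewrite divr_gt0.
case: (pow_small E0 e2) => K HK.
exists (N1 + K)%N => N le; rewrite -(subnKC (leq_trans (leq_addr _ _) le)).
apply: le_lt_trans (bnd _) _.
have hK : h ^+ (N - N1) * E <= h ^+ K * E.
  apply: ler_wpM2r => //; apply: ler_wiXn2l => //.
  by rewrite leq_subRL ?(leq_trans (leq_addr _ _) le).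
have key : 2%:R * (eps / 4%:R) = eps / 2%:R.
  by rewrite mulrC -mulrA; congr (eps * _); apply/eqP.
rewrite key [X in _ < X](splitr eps).
apply: le_lt_trans (lerD hK (lexx _)) _.
by rewrite ltr_leD.
Qed.

Lemma trunc0 (g : 'I_0 -> nat) N : trunc_prob g N = 1.
Proof.
rewrite /trunc_prob (big_pred1 (ffun0 (card_ord 0))) => [|s].
  by rewrite /point_prob big_ord0.
have -> : s = ffun0 (card_ord 0) by apply/ffunP => -[].
rewrite /= eqxx; by apply/forallP => -[].
Qed.

Lemma rhs0 (g : 'I_0 -> nat) : rhs_formula g = 1.
Proof.
rewrite /rhs_formula big_geq // invr1 mulr1 expr0 mul1r.
rewrite (eq_bigr (fun _ => 1)) => [|s _]; last by rewrite big_ord0.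
by rewrite sumr_const card_Sn.
Qed.

Lemma main n (g : 'I_n -> nat) : conv (trunc_prob g) (rhs_formula g).
Proof.
elim: n g => [|n IH] g.
  by move=> eps e0; exists 0%N => N _; rewrite trunc0 rhs0 subrr normr0.
apply: (@conv_rec _ _ (h ^+ n.+1) (fun N => \sum_(i < n.+1) (h * (h ^+ (g i).+1) ^+ n) *
   (trunc_prob (fun k => g (lift i k)) (N - g i) - rhs_formula (fun k => g (lift i k))))).
- exact: exprn_ge0.
- by rewrite exprS ler_piMr // exprn_ile1.
- move=> N; rewrite T_rec [in LHS](rhs_rec g).
  rewrite (eq_bigr _ (fun i _ => mulrBr _ _ _)) sumrB mulrBr opprD addrACA //.
- apply: conv_sum => i; apply: conv_scale.
    rewrite ger0_norm ?mulr_ge0 ?exprn_ge0 //.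
    by rewrite mulr_ile1 ?exprn_ge0 ?exprn_ile1 // exprn_ge0.
  exact: conv_sub (conv_shift _ (IH _)).
Qed.

Local Close Scope ring_scope.

Theorem theorem2 (n : nat) (hn : (1 <= n)%N) (gamma : 'I_n -> nat) :
  prob_A_eq gamma (rhs_formula gamma).
Proof. exact: main. Qed.
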